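(* Let $k$ be algebraically closed of characteristic zero and $q\in k^\times$ not a root of unity. Suppose $a,b\in SL_n(k((t)))$ and there is $c\in GL_n(k((t)))$ with $b=c\,a\,\sigma_q(c)^{-1}$. Then there exists $c'\in SL_n(k((t)))$ with $b=c'a\sigma_q(c')^{-1}$. In other words, the natural map from $q$-conjugacy classes in $SL_n(k((t)))$ to $q$-conjugacy classes in $GL_n(k((t)))$ is injective.
   Context: $\sigma_q$ is the $k$-automorphism $a(t)\mapsto a(qt)$ of $k((t))$, applied entrywise to matrices. A $q$-conjugacy class in a $\sigma_q$-stable subgroup $G\subseteq GL_n(k((t)))$ is an orbit of $G$ acting on itself by $g\mapsto hg\sigma_q(h)^{-1}$. *)

(* Defs.v *)
From HB Require Import structures.
From mathcomp Require Import all_boot all_order all_algebra.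
From Stdlib Require Import ClassicalDescription FunctionalExtensionality IndefiniteDescription Classical.
Set Implicit Arguments. Unset Strict Implicit. Unset Printing Implicit Defensive.
Import GRing.Theory.
Local Open Scope ring_scope.

Section PSer.
Variable K : fieldType.

Record pser := Pser { pcoef : nat -> K }.

Lemma pser_ext (f g : pser) : (forall n, pcoef f n = pcoef g n) -> f = g.
Proof.
case: f g => f [g] /= H; congr Pser; exact: functional_extensionality.
Qed.

Definition pser_eqb (f g : pser) : bool :=
  if excluded_middle_informative (f = g) then true else false.
Lemma pser_eqP : Equality.axiom pser_eqb.
Proof.
move=> f g; rewrite /pser_eqb; case: excluded_middle_informative => H.
  exact: ReflectT. exact: ReflectF.
Qed.
HB.instance Definition _ := hasDecEq.Build pser pser_eqP.

Definition pser_find (P : pred pser) (_ : nat) : option pser :=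
  match excluded_middle_informative (exists x, P x) with
  | left h => Some (proj1_sig (constructive_indefinite_description _ h))
  | right _ => None
  end.
Lemma pser_find_correct P n x : pser_find P n = Some x -> P x.
Proof.
rewrite /pser_find; case: excluded_middle_informative => // h [<-].
by case: constructive_indefinite_description.
Qed.
Lemma pser_find_complete (P : pred pser) : (exists x, P x) -> exists n, pser_find P n.
Proof. by move=> h; exists 0%N; rewrite /pser_find; case: excluded_middle_informative. Qed.
Lemma pser_find_ext (P Q : pred pser) : P =1 Q -> pser_find P =1 pser_find Q.
Proof. by move=> /functional_extensionality -> . Qed.
HB.instance Definition _ :=
  hasChoice.Build pser pser_find_correct pser_find_complete pser_find_ext.

Definition pzero := Pser (fun _ => 0).
Definition popp f := Pser (fun n => - pcoef f n).
Definition padd f g := Pser (fun n => pcoef f n + pcoef g n).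
Lemma paddA : associative padd.
Proof. by move=> f g h; apply: pser_ext => n /=; rewrite addrA. Qed.
Lemma paddC : commutative padd.
Proof. by move=> f g; apply: pser_ext => n /=; rewrite addrC. Qed.
Lemma padd0 : left_id pzero padd.
Proof. by move=> f; apply: pser_ext => n /=; rewrite add0r. Qed.
Lemma paddN : left_inverse pzero popp padd.
Proof. by move=> f; apply: pser_ext => n /=; rewrite addNr. Qed.
HB.instance Definition _ := GRing.isZmodule.Build pser paddA paddC padd0 paddN.

Definition pmul f g :=
  Pser (fun n => \sum_(j < n.+1) pcoef f j * pcoef g (n - j)).
Definition pone := Pser (fun n => if n == 0%N then 1 else 0).

Definition ptrunc (n : nat) f : {poly K} := \poly_(i < n.+1) pcoef f i.

Lemma pmulE N n f g : (n <= N)%N ->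
  pcoef (pmul f g) n = (ptrunc N f * ptrunc N g)`_n.
Proof.
move=> le; rewrite coefM /=; apply: eq_bigr => i _.
have hi : (i < N.+1)%N by apply: leq_trans (ltn_ord i) _.
have hj : (n - i < N.+1)%N by rewrite ltnS (leq_trans (leq_subr _ _)).
by rewrite !coef_poly hi hj.
Qed.

Arguments pmulE N {n f g}.

Lemma coefM_le (P Q H : {poly K}) n : (forall i, (i <= n)%N -> P`_i = Q`_i) ->
  (P * H)`_n = (Q * H)`_n.
Proof.
by move=> e; rewrite !coefM; apply: eq_bigr => i _; rewrite e // -ltnS.
Qed.

Lemma pmulC : commutative pmul.
Proof. by move=> f g; apply: pser_ext => n; rewrite !(pmulE n) // mulrC. Qed.

Lemma pmulA : associative pmul.
Proof.
move=> f g h; apply: pser_ext => n.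
rewrite (pmulE n) // [pmul (pmul f g) h]pmulC (@pmulE n n h (pmul f g)) //.
rewrite (mulrC (ptrunc n f)).
rewrite (@coefM_le (ptrunc n (pmul g h)) (ptrunc n g * ptrunc n h)); last first.
  by move=> i le; rewrite coef_poly ifT ?ltnS // (pmulE n).
rewrite (mulrC (ptrunc n h)).
rewrite (@coefM_le (ptrunc n (pmul f g)) (ptrunc n f * ptrunc n g)); last first.
  by move=> i le; rewrite coef_poly ifT ?ltnS // (pmulE n).
by rewrite mulrC mulrA.
Qed.

Lemma ptrunc1 n : ptrunc n pone = 1.
Proof.
by apply/polyP => i; rewrite coef_poly coef1 /=; case: i => [|i] //; case: ifP.
Qed.

Lemma pmul1 : left_id pone pmul.
Proof.
move=> f; apply: pser_ext => n; rewrite (pmulE n) // ptrunc1 mul1r.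
by rewrite coef_poly ltnSn.
Qed.

Lemma ptruncD n f g : ptrunc n (padd f g) = ptrunc n f + ptrunc n g.
Proof. by apply/polyP => i; rewrite coefD !coef_poly; case: ifP; rewrite ?addr0. Qed.

Lemma pmulDl : left_distributive pmul padd.
Proof.
move=> f g h; apply: pser_ext => n.
rewrite [LHS](pmulE n) // ptruncD mulrDl coefD; congr (_ + _); by rewrite (pmulE n).
Qed.

Lemma pone_neq0 : pone != pzero.
Proof.
apply/eqP => /(congr1 (fun f => pcoef f 0%N)) /= /eqP; by rewrite oner_eq0.
Qed.

HB.instance Definition _ :=
  GRing.Zmodule_isComNzRing.Build pser pmulA pmulC pmul1 pmulDl pone_neq0.

Definition punit : {pred pser} := fun f =>
  if excluded_middle_informative (exists g, g * f = 1) then true else false.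
Definition pinv (f : pser) : pser :=
  match excluded_middle_informative (exists g, g * f = 1) with
  | left h => proj1_sig (constructive_indefinite_description _ h)
  | right _ => f
  end.
Lemma pmulV : {in punit, left_inverse 1 pinv *%R}.
Proof.
move=> f; rewrite /punit /pinv unfold_in; case: excluded_middle_informative => // h _.
by case: constructive_indefinite_description.
Qed.
Lemma punitPl (f g : pser) : g * f = 1 -> punit f.
Proof.
by move=> e; rewrite /punit; case: excluded_middle_informative => // [[]]; exists g.
Qed.
Lemma pinv_out : {in [predC punit], pinv =1 id}.
Proof.
move=> f; rewrite !inE /punit /pinv unfold_in /=; case: excluded_middle_informative => // .
Qed.
HB.instance Definition _ :=
  GRing.ComNzRing_hasMulInverse.Build pser pmulV punitPl pinv_out.

Lemma pser_neq0 (f : pser) : f != 0 -> exists i, pcoef f i != 0.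
Proof.
move=> nz; case: (classic (exists i, pcoef f i != 0)) => // H.
case/eqP: nz; apply: pser_ext => n /=.
by apply/eqP; apply/negPn/negP => h; apply: H; exists n.
Qed.

Lemma pser_integral : GRing.integral_domain_axiom pser.
Proof.
move=> f g fg0; apply/norP => -[/pser_neq0 hf /pser_neq0 hg].
case: (ex_minnP hf) => i fi mi; case: (ex_minnP hg) => j gj mj.
have : pcoef (f * g) (i + j) = 0 by rewrite fg0.
rewrite /= (bigD1 (@Ordinal (i + j).+1 i (leq_addr j i) : 'I_(i + j).+1)) //=.
rewrite big1 ?addr0 ?addKn => [/eqP|k nki]; first by rewrite mulf_eq0 (negbTE fi) (negbTE gj).
have [lt|ge] := ltnP k i.
  have : pcoef f k == 0 by apply/negPn/negP => h; have := mi _ h; rewrite leqNgt lt.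
  by move/eqP ->; rewrite mul0r.
have lt : (i < k)%N by rewrite ltn_neqAle ge andbT; apply: contra nki => /eqP ik; apply/eqP/val_inj.
have : pcoef g (i + j - k) == 0.
  apply/negPn/negP => h; have := mj _ h; rewrite leqNgt.
  by rewrite ltn_subLR ?ltn_add2r ?lt //; exact: (ltn_ord k).
by move/eqP ->; rewrite mulr0.
Qed.
HB.instance Definition _ := GRing.ComUnitRing_isIntegral.Build pser pser_integral.

(* sigma_q on power series: t |-> q t *)
Definition psig (q : K) (f : pser) : pser := Pser (fun n => q ^+ n * pcoef f n).

End PSer.

(* The field of formal Laurent series k((t)), realised as Frac(k[[t]]). *)
Definition laurent (K : fieldType) := {fraction pser K}.

Definition sigma_q (K : fieldType) (q : K) (x : laurent K) : laurent K :=
  let r := repr x in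
  (tofrac (psig q (r.1))) / (tofrac (psig q (r.2))).

(* Main.v *)
Require Import Defs.
From HB Require Import structures.
From mathcomp Require Import all_boot all_order all_algebra.
From mathcomp Require Import ring.
Set Implicit Arguments. Unset Strict Implicit. Unset Printing Implicit Defensive.
Import GRing.Theory.
Local Open Scope ring_scope.
Local Open Scope quotient_scope.

Lemma fracE (R : idomainType) (x : {fraction R}) :
  x = tofrac (repr x).1 / tofrac (repr x).2.
Proof.
have hd := denom_ratioP (repr x).
apply: (@mulIf _ (tofrac (repr x).2)); first by rewrite tofrac_eq0.
rewrite divfK ?tofrac_eq0 //.
rewrite -{1}[x]reprK.
rewrite /tofrac -!lock.
rewrite -[_ * _]FracField.pi_mul.
apply/eqmodP; rewrite /= FracField.equivfE /FracField.mulf !numden_Ratio ?oner_neq0 ?mulr1 //.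
by rewrite mulrC.
Qed.

Lemma divB_gen (F : fieldType) (a b c d : F) : b != 0 -> d != 0 ->
  a / b - c / d = (a * d - c * b) / (b * d).
Proof. by move=> hb hd; field; rewrite hb hd. Qed.

Section S.
Variable K : fieldType.
Variable q : K.
Hypothesis hq : q != 0.

Lemma pcoefM (f g : pser K) n :
  pcoef (f * g) n = \sum_(j < n.+1) pcoef f j * pcoef g (n - j).
Proof. by []. Qed.

Lemma pcoefD (f g : pser K) n : pcoef (f + g) n = pcoef f n + pcoef g n.
Proof. by []. Qed.
Lemma pcoefN (f : pser K) n : pcoef (- f) n = - pcoef f n.
Proof. by []. Qed.
Lemma pcoef0 n : pcoef (0 : pser K) n = 0.
Proof. by []. Qed.
Lemma pcoef1 n : pcoef (1 : pser K) n = if n == 0%N then 1 else 0.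
Proof. by []. Qed.

Lemma psigM f g : psig q (f * g) = psig q f * psig q g.
Proof.
apply: pser_ext => n; rewrite /= mulr_sumr; apply: eq_bigr => j _.
have hj : (j <= n)%N by rewrite -ltnS.
by rewrite mulrACA -exprD subnKC.
Qed.
Lemma psigD f g : psig q (f + g) = psig q f + psig q g.
Proof. by apply: pser_ext => n; rewrite /= mulrDr. Qed.
Lemma psigN f : psig q (- f) = - psig q f.
Proof. by apply: pser_ext => n; rewrite /= mulrN. Qed.
Lemma psig1 : psig q 1 = 1.
Proof. by apply: pser_ext => n; rewrite /=; case: eqP => [->|]; rewrite ?expr0 ?mulr1 ?mulr0. Qed.
Lemma psig_eq0 f : (psig q f == 0) = (f == 0).
Proof.
apply/eqP/eqP => [h|->]; last by apply: pser_ext => n; rewrite /= mulr0.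
apply: pser_ext => n; have := congr1 (fun f => pcoef f n) h => /= /eqP.
by rewrite mulf_eq0 expf_eq0 (negbTE hq) andbF /= => /eqP.
Qed.

Lemma exfrac (x : laurent K) : exists f g, g != 0 /\ x = tofrac f / tofrac g.
Proof. exists (repr x).1, (repr x).2; split; [exact: denom_ratioP | exact: fracE]. Qed.

Lemma sigma_frac f g : g != 0 ->
  sigma_q q (tofrac f / tofrac g) = tofrac (psig q f) / tofrac (psig q g).
Proof.
move=> hg; rewrite /sigma_q.
set x := tofrac f / tofrac g.
have E := fracE x.
have hr := denom_ratioP (repr x).
have key : f * (repr x).2 = (repr x).1 * g.
  apply/eqP; rewrite -tofrac_eq !tofracM -eqr_div ?tofrac_eq0 //.
  by rewrite -E.
apply/eqP; rewrite eqr_div ?tofrac_eq0 ?psig_eq0 // -!tofracM -!psigM key.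
by rewrite mulrC.
Qed.

Lemma sigma_zmod : zmod_morphism (sigma_q q).
Proof.
move=> x y; have [f [g [hg ->]]] := exfrac x; have [f' [g' [hg' ->]]] := exfrac y.
have hgg : g * g' != 0 by rewrite mulf_neq0.
rewrite (_ : tofrac f / tofrac g - tofrac f' / tofrac g' =
   tofrac (f * g' - f' * g) / tofrac (g * g')); last first.
  by rewrite tofracB !tofracM divB_gen ?tofrac_eq0.
rewrite !sigma_frac // psigD psigN !psigM !tofracB !tofracM.
by rewrite divB_gen ?tofrac_eq0 ?psig_eq0.
Qed.

Lemma sigma_monoid : monoid_morphism (sigma_q q).
Proof.
split.
  rewrite -[1 : laurent K]divr1 -tofrac1 sigma_frac ?oner_neq0 // psig1 tofrac1.
  by rewrite divr1.
move=> x y; have [f [g [hg ->]]] := exfrac x; have [f' [g' [hg' ->]]] := exfrac y.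
have hgg : g * g' != 0 by rewrite mulf_neq0.
rewrite (_ : tofrac f / tofrac g * (tofrac f' / tofrac g') =
   tofrac (f * f') / tofrac (g * g')); last first.
  by rewrite !tofracM mulf_div.
by rewrite !sigma_frac // !psigM !tofracM mulf_div.
Qed.

Definition sigr : {rmorphism laurent K -> laurent K} :=
  HB.pack (sigma_q q) (GRing.isZmodMorphism.Build _ _ (sigma_q q) sigma_zmod)
    (GRing.isMonoidMorphism.Build _ _ (sigma_q q) sigma_monoid).


Lemma psig_coef (f : pser K) n : pcoef (psig q f) n = q ^+ n * pcoef f n.
Proof. by []. Qed.

Definition pC (e : K) : pser K := Pser (fun n => if n == 0%N then e else 0).

Lemma pcoef_CM e (g : pser K) n : pcoef (pC e * g) n = e * pcoef g n.
Proof.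
rewrite pcoefM big_ord_recl /= subn0 big1 ?addr0 // => i _.
by rewrite /= mul0r.
Qed.

Lemma pC_mul a b : pC a * pC b = pC (a * b).
Proof.
apply: pser_ext => n; rewrite pcoef_CM /=; case: eqP => _; by rewrite ?mulr0.
Qed.

Lemma pC1 : pC 1 = 1.
Proof. by apply: pser_ext. Qed.

Lemma pCX e m : pC e ^+ m = pC (e ^+ m).
Proof.
elim: m => [|m IH]; first by rewrite !expr0 pC1.
by rewrite !exprS IH pC_mul.
Qed.

Lemma psigC e : psig q (pC e) = pC e.
Proof. apply: pser_ext => n /=; case: eqP => [->|_]; by rewrite ?expr0 ?mul1r ?mulr0. Qed.

Lemma pcoef_lead (u v : pser K) a b :
  (forall j, (j < a)%N -> pcoef u j = 0) -> (forall j, (j < b)%N -> pcoef v j = 0) ->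
  pcoef (u * v) (a + b) = pcoef u a * pcoef v b.
Proof.
move=> hu hv; rewrite pcoefM.
rewrite (bigD1 (@Ordinal (a + b).+1 a (leq_addr b a) : 'I_(a + b).+1)) //=.
rewrite big1 ?addr0 ?addKn // => k nka.
have [lt|ge] := ltnP k a; first by rewrite hu ?mul0r.
have lt : (a < k)%N.
  by rewrite ltn_neqAle ge andbT; apply: contra nka => /eqP ak; apply/eqP/val_inj.
rewrite hv ?mulr0 //.
by rewrite ltn_subLR ?ltn_add2r ?lt //; exact: (ltn_ord k).
Qed.

Hypothesis hroot : forall m : nat, (0 < m)%N -> q ^+ m != 1.

Lemma sigma_fixed x : sigma_q q x = x -> exists e, x = tofrac (pC e).
Proof.
have [f [g [hg ->]]] := exfrac x.
rewrite sigma_frac // => /eqP.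
rewrite eqr_div ?tofrac_eq0 ?psig_eq0 // -!tofracM tofrac_eq => /eqP E.
have [b gb mb] := ex_minnP (pser_neq0 hg).
set e := pcoef f b / pcoef g b; exists e.
set h := f - pC e * g.
have Eh : psig q h * g = h * psig q g.
  rewrite /h psigD psigN psigM psigC !mulrBl E.
  by rewrite mulrAC.
have hb : pcoef h b = 0.
  by rewrite /h pcoefD pcoefN pcoef_CM /e divfK // subrr.
suff h0 : h = 0.
  have -> : f = pC e * g by apply/eqP; rewrite -subr_eq0 -/h h0.
  by rewrite tofracM mulfK // tofrac_eq0.
apply/eqP/negP => /negP hn.
have [a ha ma] := ex_minnP (pser_neq0 hn).
have hz : forall j, (j < a)%N -> pcoef h j = 0.
  move=> j lt; apply/eqP/negP => /negP nz; have := ma _ nz; by rewrite leqNgt lt.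
have gz : forall j, (j < b)%N -> pcoef g j = 0.
  move=> j lt; apply/eqP/negP => /negP nz; have := mb _ nz; by rewrite leqNgt lt.
have : pcoef (psig q h * g) (a + b) = pcoef (h * psig q g) (a + b) by rewrite Eh.
have hz' : forall j, (j < a)%N -> pcoef (psig q h) j = 0.
  by move=> j lt; rewrite psig_coef hz ?mulr0.
have gz' : forall j, (j < b)%N -> pcoef (psig q g) j = 0.
  by move=> j lt; rewrite psig_coef gz ?mulr0.
rewrite (pcoef_lead hz' gz) (pcoef_lead hz gz').
rewrite !psig_coef => E0.
have : q ^+ a * (pcoef h a * pcoef g b) = q ^+ b * (pcoef h a * pcoef g b).
  by rewrite mulrA E0 mulrCA.
move/(mulIf (mulf_neq0 ha gb)) => eqab.
suff abe : a = b by move: ha; rewrite abe hb eqxx.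
have qXD : forall m p : nat, (m < p)%N -> q ^+ m = q ^+ p -> False.
  move=> m p lt; rewrite -(subnKC (ltnW lt)) exprD => /esym/eqP.
  rewrite -subr_eq0 -{2}[q ^+ m]mulr1 -mulrBr mulf_eq0 expf_eq0 (negbTE hq) andbF /=.
  by rewrite subr_eq0 (negbTE (hroot _)) // subn_gt0.
case: (ltngtP a b) => // lt; first by case: (qXD _ _ lt eqab).
by case: (qXD _ _ lt (esym eqab)).
Qed.
End S.

Theorem mainTheorem3 (k : closedFieldType) (char0 : [pchar k] =i pred0)
    (q : k) (q_neq0 : q != 0) (q_not_root1 : forall m : nat, (0 < m)%N -> q ^+ m != 1)
    (n : nat) (a b c : 'M[laurent k]_n) :
  \det a = 1 -> \det b = 1 -> c \in unitmx ->
  b = c *m a *m invmx (map_mx (sigma_q q) c) ->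
  exists c' : 'M[laurent k]_n,
    \det c' = 1 /\ b = c' *m a *m invmx (map_mx (sigma_q q) c').
Proof.
case: n a b c => [|n] a b c da db cu E.
  by exists c; split => //; rewrite det_mx00.
set d := \det c.
have dnz : d != 0 by rewrite -unitfE -unitmxE.
pose s := @sigr k q q_neq0.
have dsc : \det (map_mx (sigma_q q) c) = sigma_q q d.
  by rewrite (_ : map_mx (sigma_q q) c = map_mx s c) // det_map_mx.
have fx : sigma_q q d = d.
  have := db; rewrite E !det_mulmx det_inv dsc da mulr1 -/d.
  have [s0|snz] := eqVneq (sigma_q q d) 0.
    by rewrite s0 invr0 mulr0 => /eqP; rewrite eq_sym oner_eq0.
  by move/(congr1 (fun z => z * sigma_q q d)); rewrite divfK // mul1r.
have [e de] := sigma_fixed q_neq0 q_not_root1 fx.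
have enz : e != 0.
  apply: contra dnz => /eqP e0; rewrite de e0.
  have -> : pC 0 = 0 :> pser k by apply: pser_ext => i /=; case: eqP.
  by rewrite tofrac0.
have [mu hmu] := @solve_monicpoly k n.+1 (fun i => if i == 0%N then e^-1 else 0) isT.
move: hmu; rewrite big_ord_recl big1 /= ?expr0 ?mulr1 ?addr0 => [hmu|i _]; last by rewrite mul0r.
have munz : mu != 0.
  apply/eqP => m0; move: hmu; rewrite m0 expr0n /= => /esym/eqP.
  by rewrite invr_eq0 (negbTE enz).
set lam := tofrac (pC mu).
have lnz : lam != 0.
  rewrite tofrac_eq0; apply/eqP => /(congr1 (fun f => pcoef f 0)) /= /eqP.
  by rewrite (negbTE munz).
have slam : sigma_q q lam = lam.
  rewrite /lam -[tofrac _]divr1 -tofrac1 sigma_frac ?oner_neq0 //.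
  by rewrite psigC psig1.
exists (lam *: c); split.
  rewrite detZ -/d de /lam -tofracXn -tofracM pCX pC_mul hmu mulVf // pC1 tofrac1.
rewrite (_ : map_mx (sigma_q q) (lam *: c) = lam *: map_mx (sigma_q q) c); last first.
  by rewrite (_ : map_mx (sigma_q q) (lam *: c) = map_mx s (lam *: c)) // map_mxZ /=; congr (_ *: _).
rewrite invmxZ; last first.
  by rewrite unitmxE detZ dsc fx unitfE mulf_neq0 ?expf_neq0.
by rewrite -!scalemxAl -scalemxAr scalerA mulfV // scale1r -E.
Qed.
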